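(* Let $M(n,r)\subseteq S_0(n,r)$ be the subspace spanned by all open orbits $e_A$. For any $j\in\{1,\dots,n\}$, let $\lambda=r\alpha_j$ (the composition with $r$ in position $j$ and $0$ elsewhere). Then the two-sided ideal of $S_0(n,r)$ generated by $k_\lambda$ equals $M(n,r)$. Consequently $M(n,r)$ equals the two-sided ideal generated by all $k_\lambda$ with $\lambda$ having exactly one nonzero entry.
   Context: Setup: Fix positive integers $n,r$ and a field $k$. $\Lambda(n,r)$ is the set of compositions of $r$ into $n$ nonnegative parts; $\alpha_j$ is the $j$-th unit vector. $\Theta(n,r)$ is the set of $n\times n$ nonnegative integer matrices with entry sum $r$, with row vector $\mathrm{ro}(A)$ and column vector $\mathrm{co}(A)$ (vectors of row and column sums). For an $r$-dimensional space $V$ (over a finite or algebraically closed field), $\mathcal F_\lambda$ denotes the variety of flags $0=V_0\subseteq\cdots\subseteq V_n=V$ with $\dim V_i/V_{i-1}=\lambda_i$; $GL(V)$-orbits $e_A$ on pairs of flags correspond to $A\in\Theta(n,r)$ via $a_{ij}=\dim(V_i\cap V'_j)-\dim(V_i\cap V'_{j-1}+V_{i-1}\cap V'_j)$, and $e_A\subseteq\mathcal F_{\mathrm{ro}(A)}\times\mathcal F_{\mathrm{co}(A)}$; $e_A$ is open if it is open in $\mathcal F_{\mathrm{ro}(A)}\times\mathcal F_{\mathrm{co}(A)}$. The $0$-Schur algebra $S_0(n,r)$ (specialization at $q=0$ of the $q$-Schur algebra, tensored with $k$) has basis $\{e_A\}$ with $e_Ae_B=0$ if $\mathrm{co}(A)\neq\mathrm{ro}(B)$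 and otherwise $e_Ae_B=e_C$, $e_C$ the unique open orbit among pairs $(f,h)$ such that $(f,g)\in e_A,(g,h)\in e_B$ for some $g$. $k_\lambda=e_{\mathrm{diag}(\lambda)}$. *)

(* Defs.v *)
From HB Require Import structures.
From mathcomp Require Import all_boot all_order all_algebra.
Set Implicit Arguments. Unset Strict Implicit. Unset Printing Implicit Defensive.
Import GRing.Theory.

(* Theta(n,r): n x n matrices of nonnegative integers with entry sum r
   (entries are automatically <= r). *)
Definition Theta (n r : nat) :=
  {A : {ffun 'I_n * 'I_n -> 'I_r.+1} | (\sum_p (A p : nat)) == r}.

Definition entry n r (A : Theta n r) (a b : 'I_n) : nat := val A (a, b).

Definition ro n r (A : Theta n r) (a : 'I_n) : nat := \sum_b entry A a b.
Definition co n r (A : Theta n r) (b : 'I_n) : nat := \sum_a entry A a b.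

Definition psum n (lam : 'I_n -> nat) (i : 'I_n.+1) : nat :=
  \sum_(a : 'I_n | a < i) lam a.

(* dA i j = dim (V_i \cap V'_j) for a pair of flags in the orbit e_A,
   i, j = 0..n *)
Definition dimcap n r (A : Theta n r) (i j : 'I_n.+1) : nat :=
  \sum_(a : 'I_n | a < i) \sum_(b : 'I_n | b < j) entry A a b.

(* e_A is open in F_ro(A) x F_co(A): generic position, i.e.
   dim (V_i \cap V'_j) = max(0, dim V_i + dim V'_j - r) for all i, j. *)
Definition openA n r (A : Theta n r) : bool :=
  [forall i, forall j,
     dimcap A i j == (psum (ro A) i + psum (co A) j) - r].

(* Generic (open-orbit) product of orbits: if co(A) = ro(B), the open orbit
   e_C in the composite e_A o e_B is the orbit whose intersection dimensions
   are the minimal possible ones,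
     dim(V_i \cap V''_j) = max_k (dA(i,k) + dB(k,j) - dim V'_k),
   (equivalently, C is the double coset of the Demazure product of the
   longest representatives of A and B). *)
Definition genprod n r (A B : Theta n r) : option (Theta n r) :=
  if [forall b, co A b == ro B b] then
    [pick C : Theta n r | [forall i, forall j,
        dimcap C i j ==
        \max_(k < n.+1) (dimcap A i k + dimcap B k j - psum (co A) k)]]
  else None.

(* The 0-Schur algebra S_0(n,r) over k: the k-vector space with basis
   {e_A : A in Theta(n,r)}, elements are coordinate functions. *)
Definition S0 (k : fieldType) (n r : nat) := {ffun Theta n r -> k}.

Definition eb (k : fieldType) n r (A : Theta n r) : S0 k n r :=
  [ffun C => if C == A then 1%R else 0%R].

Definition mulS (k : fieldType) n r (f g : S0 k n r) : S0 k n r :=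
  [ffun C => \sum_A \sum_B
     (if genprod A B == Some C then (f A * g B)%R else 0%R)]%R.

Definition kdiag (k : fieldType) n r (lam : 'I_n -> nat) : S0 k n r :=
  [ffun C => if [forall a, forall b,
                  entry C a b == (if a == b then lam a else 0)]
             then 1%R else 0%R].

Definition ralpha n (r : nat) (j : 'I_n) : 'I_n -> nat :=
  fun a => if a == j then r else 0.

Definition ideal_gen (k : fieldType) n r (P : S0 k n r -> Prop)
  (y : S0 k n r) : Prop :=
  exists (m : nat) (a x b : 'I_m -> S0 k n r),
    (forall i, P (x i)) /\ y = (\sum_i mulS (mulS (a i) (x i)) (b i))%R.

Definition inM (k : fieldType) n r (y : S0 k n r) : Prop :=
  forall A : Theta n r, y A != 0%R -> openA A.

Definition one_part_comp n (r : nat) (lam : 'I_n -> nat) : Prop :=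
  \sum_a lam a = r /\ #|[set a | lam a != 0%N]| = 1%N.

(* Main.v *)
Require Import Defs.
From HB Require Import structures.
From mathcomp Require Import all_boot all_order all_algebra.
From mathcomp Require Import zify.
Set Implicit Arguments. Unset Strict Implicit. Unset Printing Implicit Defensive.

Section Comb.
Variables (n r : nat).
Implicit Types (A B C D : Theta n r).

Lemma sub_sum (I : finType) (P Q : pred I) (F : I -> nat) :
  (forall i, P i -> Q i) -> \sum_(i | P i) F i <= \sum_(i | Q i) F i.
Proof.
move=> H; rewrite [X in _ <= X]big_mkcond [X in X <= _]big_mkcond /=.
apply: leq_sum => i _; case Pi: (P i); last by [].
by rewrite H.
Qed.

Lemma total A : \sum_a \sum_b entry A a b = r.
Proof.
case: A => f Hf; rewrite /entry /=; move/eqP: (Hf) => Hf2.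
rewrite pair_bigA /=; apply: etrans Hf2; by apply: eq_bigr => -[a b].
Qed.

Lemma dimcap_row A i : dimcap A i ord_max = psum (ro A) i.
Proof.
rewrite /dimcap /psum /ro; apply: eq_bigr => a _.
by apply: eq_bigl => b; rewrite ltn_ord.
Qed.

Lemma dimcap_col A j : dimcap A ord_max j = psum (co A) j.
Proof.
rewrite /dimcap /psum /co exchange_big /=.
apply: eq_bigr => b _; apply: eq_bigl => a; by rewrite ltn_ord.
Qed.

Lemma psum_ro_max A : psum (ro A) ord_max = r.
Proof.
rewrite /psum /ro; apply: etrans (total A); apply: eq_bigl => a; by rewrite ltn_ord.
Qed.

Lemma psum_co_max A : psum (co A) ord_max = r.
Proof. by rewrite -dimcap_col dimcap_row psum_ro_max. Qed.

Lemma dimcap_ub1 A i j : dimcap A i j <= psum (ro A) i.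
Proof.
rewrite -dimcap_row; apply: leq_sum => a _; apply: sub_sum => b _.
by rewrite ltn_ord.
Qed.

Lemma dimcap_ub2 A i j : dimcap A i j <= psum (co A) j.
Proof.
rewrite -dimcap_col /dimcap; apply: sub_sum => a _; by rewrite ltn_ord.
Qed.

Lemma dimcap_lb A i j : psum (ro A) i + psum (co A) j <= dimcap A i j + r.
Proof.
rewrite -dimcap_row -dimcap_col -[X in _ <= _ + X](total A) /dimcap.
rewrite (big_mkcond (fun a : 'I_n => a < i)) /=.
rewrite (big_mkcond (fun a : 'I_n => a < i)) /=.
rewrite (big_mkcond (fun a : 'I_n => a < ord_max)) /=.
rewrite -!big_split /=; apply: leq_sum => a _.
rewrite ltn_ord.
have -> : \sum_(b < n | b < n) entry A a b = \sum_b entry A a b.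
  by apply: eq_bigl => b; rewrite ltn_ord.
case: (a < i); first by rewrite addnC.
by rewrite !add0n; apply: sub_sum.
Qed.


Lemma theta_eq C D : (forall a b, entry C a b = entry D a b) -> C = D.
Proof.
move=> H; apply: val_inj; apply/ffunP => -[a b]; apply: val_inj.
exact: H.
Qed.

Lemma sumS (F : 'I_n -> nat) (a : 'I_n) :
  \sum_(b : 'I_n | b < (inord a.+1 : 'I_n.+1)) F b =
  \sum_(b : 'I_n | b < (inord a : 'I_n.+1)) F b + F a.
Proof.
have ha : a < n.+1 by rewrite ltnS ltnW.
have hb : a.+1 < n.+1 by rewrite ltnS.
rewrite (bigD1 a) /=; last by rewrite inordK.
rewrite addnC; congr (_ + _); apply: eq_bigl => b.
by rewrite !inordK // ltnS ltn_neqAle andbC.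
Qed.

Lemma dimcap_inj C D : (forall i j, dimcap C i j = dimcap D i j) -> C = D.
Proof.
move=> H; apply: theta_eq => a b.
have Hr : forall m : 'I_n.+1, \sum_(b : 'I_n | b < m) entry C a b =
                            \sum_(b : 'I_n | b < m) entry D a b.
  move=> m; have := H (inord a.+1) m; rewrite /dimcap !sumS.
  have := H (inord a) m; rewrite /dimcap => ->; exact: addnI.
have := Hr (inord b.+1); rewrite !sumS Hr; exact: addnI.
Qed.

Definition zof A := forall k, psum (co A) k = 0 \/ psum (co A) k = r.

Lemma dimcap_zof A i j : (psum (co A) j = 0 \/ psum (co A) j = r) ->
  dimcap A i j = psum (ro A) i + psum (co A) j - r.
Proof.
have h1 := dimcap_ub1 A i j; have h2 := dimcap_ub2 A i j.
have h3 := dimcap_lb A i j.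
have h4 : psum (ro A) i <= r.
  by have := dimcap_ub2 A i ord_max; rewrite dimcap_row psum_co_max.
case=> h; rewrite h in h2 h3 *; lia.
Qed.

Lemma max_gen A B i j : (forall b, co A b = ro B b) -> zof A ->
  \max_(k < n.+1) (dimcap A i k + dimcap B k j - psum (co A) k)
  = psum (ro A) i + psum (co B) j - r.
Proof.
move=> Hco Hz.
have Hps : forall k, psum (co A) k = psum (ro B) k.
  by move=> k; apply: eq_bigr => b _; rewrite Hco.
apply/eqP; rewrite eqn_leq; apply/andP; split.
  apply/bigmax_leqP => k _.
  have h1 := dimcap_ub1 A i k; have h2 := dimcap_ub2 A i k.
  have h3 := dimcap_ub1 B k j; have h4 := dimcap_ub2 B k j.
  rewrite -Hps in h3.
  case: (Hz k) => h; rewrite h in h2 h3 *; lia.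
apply: leq_trans (leq_bigmax ord_max).
by rewrite dimcap_row dimcap_col psum_co_max.
Qed.

End Comb.

Section Gen.
Variables (n r : nat).
Implicit Types (A B C D : Theta n r).

Lemma genprod_spec A B C : genprod A B = Some C ->
  (forall b, co A b = ro B b) /\
  (forall i j, dimcap C i j =
     \max_(k < n.+1) (dimcap A i k + dimcap B k j - psum (co A) k)).
Proof.
rewrite /genprod; case: ifP => [/forallP Hf|] //.
case: pickP => // D /forallP HD [<-]; split.
  by move=> b; apply/eqP/Hf.
by move=> i j; move/forallP: (HD i) => /(_ j) /eqP.
Qed.

Lemma genprod_eq A B C : (forall b, co A b = ro B b) ->
  (forall i j, dimcap C i j =
     \max_(k < n.+1) (dimcap A i k + dimcap B k j - psum (co A) k)) ->
  genprod A B = Some C.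
Proof.
move=> Hco HC; rewrite /genprod.
have -> : [forall b, co A b == ro B b] by apply/forallP => b; apply/eqP.
case: pickP => [D /forallP HD | H].
  congr Some; apply: dimcap_inj => i j; rewrite HC.
  by move/forallP: (HD i) => /(_ j) /eqP.
have := H C; move/negbT/negP; case.
by apply/forallP => i; apply/forallP => j; apply/eqP; apply: HC.
Qed.

Lemma gen_open A B C : genprod A B = Some C -> zof A ->
  forall i j, dimcap C i j = psum (ro A) i + psum (co B) j - r.
Proof.
move=> /genprod_spec [Hco HC] Hz i j; rewrite HC; exact: max_gen.
Qed.

Lemma open_of C (P Q : 'I_n.+1 -> nat) :
  (forall i j, dimcap C i j = P i + Q j - r) -> P ord_max = r -> Q ord_max = r ->
  openA C.
Proof.
move=> H HP HQ.
have E1 : forall i, psum (ro C) i = P i.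
  by move=> i; rewrite -dimcap_row H HQ addnK.
have E2 : forall j, psum (co C) j = Q j.
  by move=> j; rewrite -dimcap_col H HP addnC addnK.
by apply/forallP => i; apply/forallP => j; rewrite H E1 E2.
Qed.

Lemma psum_ralpha (j0 : 'I_n) k :
  psum (ralpha r j0) k = 0 \/ psum (ralpha r j0) k = r.
Proof.
rewrite /psum /ralpha; case: (ltnP j0 k) => h.
  right; rewrite (bigD1 j0) //= eqxx big1 ?addn0 // => a /andP [_ /negbTE ->].
  by [].
left; apply: big1 => a ha; case: eqP => // E; subst a.
by move: (leq_trans ha h); rewrite ltnn.
Qed.

Lemma sum_diag (F : 'I_n -> nat) (a : 'I_n) :
  \sum_b (if b == a then F b else 0) = F a.
Proof.
rewrite (bigD1 a) //= eqxx big1 ?addn0 // => b /negbTE -> //.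
Qed.

End Gen.

Section Build.
Variables (n r : nat).

Lemma pair_sum (f : 'I_n * 'I_n -> nat) :
  \sum_p f p = \sum_a \sum_b f (a, b).
Proof. by rewrite pair_bigA; apply: eq_bigr => -[]. Qed.

Lemma mkTheta_subproof (f : 'I_n * 'I_n -> nat) (H : \sum_p f p == r) :
  \sum_p (([ffun p => inord (f p)] : {ffun 'I_n * 'I_n -> 'I_r.+1}) p : nat) == r.
Proof.
have Hle : forall p, f p <= r.
  move=> p; rewrite -(eqP H) (bigD1 p) //=; exact: leq_addr.
apply/eqP; apply: etrans (eqP H); apply: eq_bigr => p _.
by rewrite ffunE inordK // ltnS.
Qed.

Definition mkTheta (f : 'I_n * 'I_n -> nat) (H : \sum_p f p == r) : Theta n r :=
  exist _ [ffun p => inord (f p)] (mkTheta_subproof H).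

Lemma mkTheta_entry f H a b : entry (@mkTheta f H) a b = f (a, b).
Proof.
have Hle : f (a, b) <= r.
  rewrite -(eqP H) (bigD1 (a, b)) //=; exact: leq_addr.
by rewrite /entry /= ffunE inordK // ltnS.
Qed.

End Build.

Section Mats.
Variables (n r : nat) (j : 'I_n) (C0 : Theta n r).

Lemma sum_ralpha : \sum_a ralpha r j a = r.
Proof. exact: (sum_diag (fun=> r) j). Qed.

Lemma Delta_proof :
  \sum_p (fun p : 'I_n * 'I_n => if p.1 == p.2 then ralpha r j p.1 else 0) p == r.
Proof.
rewrite pair_sum /= -{2}sum_ralpha; apply/eqP; apply: eq_bigr => a _.
under eq_bigr => b _ do rewrite eq_sym.
exact: (sum_diag (fun=> ralpha r j a)).
Qed.

Definition Delta := mkTheta Delta_proof.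

Lemma ro_Delta a : ro Delta a = ralpha r j a.
Proof.
rewrite /ro; under eq_bigr => b _ do rewrite mkTheta_entry /= eq_sym.
exact: (sum_diag (fun=> ralpha r j a)).
Qed.

Lemma co_Delta b : co Delta b = ralpha r j b.
Proof.
rewrite /co; under eq_bigr => a _ do rewrite mkTheta_entry /=.
exact: (sum_diag (ralpha r j)).
Qed.

Lemma sum_ro (A : Theta n r) : \sum_a ro A a = r.
Proof. exact: total. Qed.

Lemma sum_co (A : Theta n r) : \sum_b co A b = r.
Proof. rewrite /co exchange_big /=; exact: total. Qed.

Lemma Acol_proof :
  \sum_p (fun p : 'I_n * 'I_n => if p.2 == j then ro C0 p.1 else 0) p == r.
Proof.
rewrite pair_sum /= -{2}(sum_ro C0); apply/eqP; apply: eq_bigr => a _.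
exact: (sum_diag (fun=> ro C0 a)).
Qed.

Definition Acol := mkTheta Acol_proof.

Lemma ro_Acol a : ro Acol a = ro C0 a.
Proof.
rewrite /ro; under eq_bigr => b _ do rewrite mkTheta_entry /=.
exact: (sum_diag (fun=> ro C0 a)).
Qed.

Lemma co_Acol b : co Acol b = ralpha r j b.
Proof.
rewrite /co /ralpha; under eq_bigr => a _ do rewrite mkTheta_entry /=.
case: (b == j); first exact: sum_ro.
by rewrite big1.
Qed.

Lemma Brow_proof :
  \sum_p (fun p : 'I_n * 'I_n => if p.1 == j then co C0 p.2 else 0) p == r.
Proof.
rewrite pair_sum /= -{2}(sum_co C0).
rewrite -(sum_diag (fun=> \sum_b co C0 b) j); apply/eqP; apply: eq_bigr => a _.
by case: (a == j) => //; rewrite big1.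
Qed.

Definition Brow := mkTheta Brow_proof.

Lemma ro_Brow a : ro Brow a = ralpha r j a.
Proof.
rewrite /ro /ralpha; under eq_bigr => b _ do rewrite mkTheta_entry /=.
case: (a == j); first exact: sum_co.
by rewrite big1.
Qed.

Lemma co_Brow b : co Brow b = co C0 b.
Proof.
rewrite /co; under eq_bigr => a _ do rewrite mkTheta_entry /=.
exact: (sum_diag (fun=> co C0 b)).
Qed.

Lemma zof_Acol : zof Acol.
Proof.
move=> k; have -> : psum (co Acol) k = psum (ralpha r j) k.
  by apply: eq_bigr => b _; rewrite co_Acol.
exact: psum_ralpha.
Qed.

Lemma genprod_AD : genprod Acol Delta = Some Acol.
Proof.
apply: genprod_eq => [b|i i']; first by rewrite co_Acol ro_Delta.
rewrite max_gen; last exact: zof_Acol.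
  rewrite dimcap_zof; last exact: zof_Acol.
  congr (_ + _ - _); apply: eq_bigr => b _; by rewrite co_Acol co_Delta.
by move=> b; rewrite co_Acol ro_Delta.
Qed.

Lemma genprod_AB : openA C0 -> genprod Acol Brow = Some C0.
Proof.
move=> /forallP Ho.
apply: genprod_eq => [b|i i']; first by rewrite co_Acol ro_Brow.
rewrite max_gen; last exact: zof_Acol.
  move/forallP: (Ho i) => /(_ i') /eqP ->.
  congr (_ + _ - _); apply: eq_bigr => b _; by rewrite ?ro_Acol ?co_Brow.
by move=> b; rewrite co_Acol ro_Brow.
Qed.

End Mats.

Section Alg.
Import GRing.Theory.
Local Open Scope ring_scope.
Variables (k : fieldType) (n r : nat).

Definition sb (c : k) (A : Theta n r) : S0 k n r :=
  [ffun A' => if A' == A then c else 0].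

Lemma eb_sb A : eb k A = sb 1 A.
Proof. by []. Qed.

Lemma mulS_sb c d A B C : genprod A B = Some C ->
  mulS (sb c A) (sb d B) = sb (c * d) C.
Proof.
move=> HC; apply/ffunP => C'; rewrite !ffunE.
rewrite (bigD1 A) //= [X in _ + X]big1; last first.
  by move=> A' HA; apply: big1 => B' _; rewrite !ffunE (negbTE HA) mul0r if_same.
rewrite addr0 (bigD1 B) //= [X in _ + X]big1; last first.
  by move=> B' HB; rewrite !ffunE (negbTE HB) mulr0 if_same.
rewrite addr0 !ffunE !eqxx HC.
by rewrite (inj_eq (@Some_inj _)) eq_sym.
Qed.

Lemma mulS0l (f g : S0 k n r) : (forall A, f A = 0) -> mulS f g = [ffun=> 0].
Proof.
move=> H; apply/ffunP => C; rewrite !ffunE; apply: big1 => A _.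
by apply: big1 => B _; rewrite H mul0r if_same.
Qed.

Lemma sum_neq0 (I : finType) (F : I -> k) : \sum_i F i != 0 -> exists i, F i != 0.
Proof.
move=> H; case: (pickP (fun i => F i != 0)) => [i Hi|H0]; first by exists i.
by move: H; rewrite big1 ?eqxx // => i _; move/negbT: (H0 i); rewrite negbK => /eqP.
Qed.

Lemma kdiag_eb (lam : 'I_n -> nat) D :
  (forall a b, entry D a b = if a == b then lam a else 0%N) ->
  kdiag k r lam = sb 1 D.
Proof.
move=> HD; apply/ffunP => C; rewrite !ffunE.
case: (C =P D) => [->|ne].
  by have -> : [forall a, forall b, entry D a b == (if a == b then lam a else 0%N)]
    by apply/forallP => a; apply/forallP => b; rewrite HD.
case: ifP => // /forallP H; case: ne; apply: theta_eq => a b.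
by rewrite HD; apply/eqP; move/forallP: (H a).
Qed.

End Alg.

Section Main.
Import GRing.Theory.
Local Open Scope ring_scope.
Variables (k : fieldType) (n r : nat).

Lemma fwd (P : S0 k n r -> Prop) :
  (forall x, P x -> exists (j0 : 'I_n) (lam : 'I_n -> nat),
      (forall a, lam a = ralpha r j0 a) /\ x = kdiag k r lam) ->
  forall y, ideal_gen P y -> inM y.
Proof.
move=> HP y [m [fa [x [fb [Hx ->]]]]] C.
rewrite sum_ffunE => /sum_neq0 [i].
case: (HP _ (Hx i)) => j0 [lam [Hl ->]].
rewrite ffunE => /sum_neq0 [D] /sum_neq0 [B].
case E1: (genprod D B == Some C); last by rewrite eqxx.
move/eqP: E1 => HDB => HX.
have : mulS (fa i) (kdiag k r lam) D != 0.
  by apply: contraNneq HX => ->; rewrite mul0r.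
rewrite ffunE => /sum_neq0 [A] /sum_neq0 [E].
case E2: (genprod A E == Some D); last by rewrite eqxx.
move/eqP: E2 => HAE.
move=> HE.
have : kdiag k r lam E != 0 by apply: contraNneq HE => ->; rewrite mulr0.
rewrite ffunE; case: ifP => [/forallP HEd _|]; last by rewrite eqxx.
have HEe : forall a b, entry E a b = if a == b then lam a else 0%N.
  by move=> a' b'; apply/eqP; move/forallP: (HEd a') => /(_ b').
have roE : forall a, ro E a = ralpha r j0 a.
  move=> a; rewrite /ro -Hl; under eq_bigr => b _ do rewrite HEe eq_sym.
  exact: (sum_diag (fun=> lam a)).
have coE : forall b, co E b = ralpha r j0 b.
  move=> b; rewrite /co -Hl; under eq_bigr => a _ do rewrite HEe.
  exact: (sum_diag lam).
have [HcoA _] := genprod_spec HAE.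
have zA : zof A.
  move=> k'; have -> : psum (co A) k' = psum (ralpha r j0) k'.
    by apply: eq_bigr => b _; rewrite HcoA roE.
  exact: psum_ralpha.
have HD := gen_open HAE zA.
have zD : zof D.
  move=> k'; rewrite -dimcap_col HD psum_ro_max addKn.
  have -> : psum (co E) k' = psum (ralpha r j0) k'.
    by apply: eq_bigr => b _; rewrite coE.
  exact: psum_ralpha.
have HC := gen_open HDB zD.
exact: (open_of HC (psum_ro_max D) (psum_co_max B)).
Qed.

Lemma bwd (j : 'I_n) (y : S0 k n r) : inM y ->
  ideal_gen (fun x => x = kdiag k r (ralpha r j)) y.
Proof.
move=> Hy.
have Hk : kdiag k r (ralpha r j) = sb 1 (Delta r j).
  by apply: kdiag_eb => a b; rewrite mkTheta_entry.
have Hterm : forall C : Theta n r,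
    mulS (mulS (sb (y C) (Acol j C)) (kdiag k r (ralpha r j))) (sb 1 (Brow j C))
    = sb (y C) C.
  move=> C; rewrite Hk; case Ho: (openA C).
    by rewrite (mulS_sb _ _ (genprod_AD j C)) (mulS_sb _ _ (genprod_AB j Ho)) !mulr1.
  have y0 : y C = 0.
    by apply/eqP; apply: contraFT Ho => /Hy.
  rewrite y0 mulS0l; first by apply/ffunP => C'; rewrite !ffunE if_same.
  move=> A; rewrite mulS0l ?ffunE // => A'; by rewrite ffunE if_same.
exists #|{: Theta n r}|.
exists (fun i => sb (y (enum_val i)) (Acol j (enum_val i))).
exists (fun=> kdiag k r (ralpha r j)).
exists (fun i => sb 1 (Brow j (enum_val i))).
split => //.
under eq_bigr => i _ do rewrite Hterm.
rewrite -(big_enum_val (fun C => sb (y C) C)).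
apply/ffunP => C'; rewrite sum_ffunE (bigD1 C') //= ffunE eqxx.
rewrite big1 ?addr0 // => C /negbTE HC; by rewrite ffunE eq_sym HC.
Qed.

End Main.

Lemma one_part_ralpha n r (j : 'I_n) : (0 < r)%N -> one_part_comp r (ralpha r j).
Proof.
move=> hr; split; first exact: sum_ralpha.
apply/eqP/cards1P; exists j; apply/setP => a; rewrite !inE /ralpha.
by case: (a == j); rewrite // -lt0n.
Qed.

Lemma one_part_inv n r (lam : 'I_n -> nat) : one_part_comp r lam ->
  exists j0, forall a, lam a = ralpha r j0 a.
Proof.
move=> [Hs /eqP/cards1P [j0 Hj]]; exists j0.
have Ha : forall a, (lam a != 0%N) = (a == j0).
  by move=> a; have := congr1 (fun S : {set 'I_n} => a \in S) Hj; rewrite !inE.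
have Hz : forall a, a != j0 -> lam a = 0%N.
  by move=> a; rewrite -Ha negbK => /eqP.
move=> a; rewrite /ralpha; case: (a =P j0) => [->|/eqP ne]; last exact: Hz.
rewrite -Hs (bigD1 j0) //= big1 ?addn0 // => b; exact: Hz.
Qed.

Theorem mainTheorem4 (k : fieldType) (n r : nat) (j : 'I_n) (hr : (0 < r)%N) :
  (forall y : S0 k n r,
     ideal_gen (fun x => x = kdiag k r (ralpha r j)) y <-> inM y) /\
  (forall y : S0 k n r,
     ideal_gen (fun x => exists lam : 'I_n -> nat,
                  one_part_comp r lam /\ x = kdiag k r lam) y <-> inM y).
Proof.
split=> y; split.
- apply: fwd => x ->; by exists j, (ralpha r j).
- exact: bwd.
- apply: fwd => x [lam [Hl ->]]; have [j0 Hj0] := one_part_inv Hl.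
  by exists j0, lam.
- move=> /(bwd j) [m [fa [x [fb [Hx E]]]]].
  exists m, fa, x, fb; split => // i; exists (ralpha r j); split => //.
  exact: one_part_ralpha.
Qed.
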